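(* Let $k>0$, $\delta(t)=\tfrac12e^{-t}+\tfrac12e^{-2t}$, $g_2\equiv0$ and $g_1(a)=-\frac14a^4+ka^3-k^2a^2-\frac34a-1$. Then in the continuous-time two-state model, $Q^*\sim(0,0)$ is a weak equilibrium but not a strong equilibrium. Moreover, for every sufficiently small $h>0$, the transition matrix $u^*\sim(0,0)$ (the identity matrix) is an equilibrium of the discrete-time problem $V^h(i,u)=\mathbb E_{i,u}[\sum_{n=0}^\infty\kappa^h(n,Y_n,u_{Y_n})]$ over all $2\times2$ transition matrices, where $\kappa^h(n,1,u_1)=\delta(nh)g_1(\alpha/h)h$ and $\kappa^h(n,2,u_2)=\delta(nh)g_2(\beta/h)h\equiv0$ for $u\sim(\alpha,\beta)$; consequently the associated generators $(u^*-I)/h\sim(0,0)$ converge to the weak but not strong equilibrium $Q^*$.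
   Context: Two-state continuous-time model: $S=\{1,2\}$, admissible rows unrestricted, so every generator has the form $Q=\begin{pmatrix}-a&a\\ b&-b\end{pmatrix}$, $a,b\ge0$, written $Q\sim(a,b)$; payoff $f(t,1,(-a,a))=\delta(t)g_1(a)$, $f(t,2,(b,-b))=\delta(t)g_2(b)$; $F(i,Q)=\mathbb E_{i,Q}[\int_0^\infty f(t,X_t,Q_{X_t})dt]$ for the chain $X$ with generator $Q$; $Q\otimes_\varepsilon Q'$ uses $Q$ on $[0,\varepsilon]$ and $Q'$ afterwards. $Q^*$ is a weak equilibrium if $\liminf_{\varepsilon\downarrow0}\varepsilon^{-1}(F(i,Q^* )-F(i,Q\otimes_\varepsilon Q^* ))\ge0$ for all $Q,i$; a strong equilibrium if for every $i,Q$ there is $\varepsilon>0$ with $F(i,Q^* )\ge F(i,Q\otimes_{\varepsilon'}Q^* )$ for all $0<\varepsilon'\le\varepsilon$. Discrete time: a transition matrix $u=\begin{pmatrix}1-\alpha&\alpha\\ \beta&1-\beta\end{pmatrix}$, $\alpha,\beta\in[0,1]$, is written $u\sim(\alpha,\beta)$; $Y$ is the discrete-time chain with transition matrix $u$; $u\otimes_1u^*$ uses $u$ at time $0$ and $u^*$ afterwards; $u^*$ is an equilibrium of $V^h$ if $V^h(i,u^* )\ge V^h(i,u\otimes_1u^* )$ for all $i\in S$ and all transition matrices $u$. *)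

(* Defs.v *)
From Stdlib Require Import Reals Lra ClassicalEpsilon.
Open Scope R_scope.

Inductive state := S1 | S2.

(** A 2x2 generator Q = [[-a, a],[b, -b]] is encoded by (a,b): Q ~ (a,b).
    The same record encodes a transition matrix u = [[1-al, al],[be, 1-be]],
    u ~ (al, be). *)
Record gen := mkGen { ga : R; gb : R }.

Definition admissible_gen (Q : gen) : Prop := 0 <= ga Q /\ 0 <= gb Q.
Definition stochastic (u : gen) : Prop :=
  0 <= ga u <= 1 /\ 0 <= gb u <= 1.

(** P(X_0 = 1) for the chain started at i. *)
Definition init1 (i : state) : R := match i with S1 => 1 | S2 => 0 end.

(** P(X_t = 1) for the homogeneous chain with generator Q ~ (a,b) and
    P(X_0 = 1) = p0, i.e. the first component of p(0) exp(tQ):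
    p(t) = b/(a+b) + (p0 - b/(a+b)) e^{-(a+b)t}  (and p(t) = p0 if a+b = 0). *)
Definition prob1 (Q : gen) (p0 t : R) : R :=
  let s := ga Q + gb Q in
  if Req_dec_T s 0 then p0 else gb Q / s + (p0 - gb Q / s) * exp (- s * t).

Definition gen_concat (Q : gen) (eps : R) (Q' : gen) (t : R) : gen :=
  if Rle_dec t eps then Q else Q'.

Definition prob1_concat (Q : gen) (eps : R) (Q' : gen) (p0 t : R) : R :=
  if Rle_dec t eps then prob1 Q p0 t else prob1 Q' (prob1 Q p0 eps) (t - eps).

(** E[f(t, X_t, Q_{X_t})] with f(t,1,(-a,a)) = delta t * g1 a,
    f(t,2,(b,-b)) = delta t * g2 b, for a time-dependent generator Qt and
    p t = P(X_t = 1). *)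
Definition exp_payoff (delta g1 g2 : R -> R) (Qt : R -> gen) (p : R -> R)
  (t : R) : R :=
  delta t * (p t * g1 (ga (Qt t)) + (1 - p t) * g2 (gb (Qt t))).

Definition improper_int_is (f : R -> R) (a l : R) : Prop :=
  (forall b, a <= b -> inhabited (Riemann_integrable f a b)) /\
  forall eps, 0 < eps -> exists B, forall b (pr : Riemann_integrable f a b),
      B <= b -> Rabs (RiemannInt pr - l) < eps.

Definition improper_int (f : R -> R) (a : R) : R :=
  epsilon (inhabits 0) (fun l => improper_int_is f a l).

Definition Fc (delta g1 g2 : R -> R) (i : state) (Q : gen) : R :=
  improper_int (exp_payoff delta g1 g2 (fun _ => Q)
                  (fun t => prob1 Q (init1 i) t)) 0.

Definition Fc_concat (delta g1 g2 : R -> R) (i : state) (Q : gen) (eps : R)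
  (Q' : gen) : R :=
  improper_int (exp_payoff delta g1 g2 (gen_concat Q eps Q')
                  (prob1_concat Q eps Q' (init1 i))) 0.

(** Weak equilibrium:
    liminf_{eps -> 0+} (F(i,Qs) - F(i, Q (x)_eps Qs)) / eps >= 0
    for all admissible Q and all i. *)
Definition weak_equilibrium (delta g1 g2 : R -> R) (Qs : gen) : Prop :=
  admissible_gen Qs /\
  forall (Q : gen) (i : state), admissible_gen Q ->
    forall eta, 0 < eta -> exists d, 0 < d /\
      forall eps, 0 < eps < d ->
        - eta <= (Fc delta g1 g2 i Qs - Fc_concat delta g1 g2 i Q eps Qs) / eps.

Definition strong_equilibrium (delta g1 g2 : R -> R) (Qs : gen) : Prop :=
  admissible_gen Qs /\
  forall (Q : gen) (i : state), admissible_gen Q ->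
    exists eps, 0 < eps /\
      forall eps', 0 < eps' <= eps ->
        Fc delta g1 g2 i Qs >= Fc_concat delta g1 g2 i Q eps' Qs.

(** Discrete time.  A (possibly time-dependent) policy is a sequence of
    transition matrices pol n ~ (alpha_n, beta_n); P(Y_n = 1): *)
Fixpoint dprob1 (pol : nat -> gen) (p0 : R) (n : nat) : R :=
  match n with
  | O => p0
  | S m => let p := dprob1 pol p0 m in
           p * (1 - ga (pol m)) + (1 - p) * gb (pol m)
  end.

Definition kappa1 (delta g1 : R -> R) (h : R) (n : nat) (u : gen) : R :=
  delta (INR n * h) * g1 (ga u / h) * h.
Definition kappa2 (delta g2 : R -> R) (h : R) (n : nat) (u : gen) : R :=
  delta (INR n * h) * g2 (gb u / h) * h.

Definition dterm (delta g1 g2 : R -> R) (h : R) (pol : nat -> gen) (i : state)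
  (n : nat) : R :=
  let p := dprob1 pol (init1 i) n in
  p * kappa1 delta g1 h n (pol n) + (1 - p) * kappa2 delta g2 h n (pol n).

Definition Vh (delta g1 g2 : R -> R) (h : R) (i : state) (pol : nat -> gen) : R :=
  epsilon (inhabits 0) (fun l => infinite_sum (dterm delta g1 g2 h pol i) l).

Definition pol_concat1 (u u' : gen) (n : nat) : gen :=
  match n with O => u | S _ => u' end.

Definition disc_equilibrium (delta g1 g2 : R -> R) (h : R) (us : gen) : Prop :=
  stochastic us /\
  forall (u : gen) (i : state), stochastic u ->
    Vh delta g1 g2 h i (fun _ => us) >= Vh delta g1 g2 h i (pol_concat1 u us).

(* Main.v *)
Require Import Defs.
From Stdlib Require Import Reals Lra ClassicalEpsilon.
From Coquelicot Require Import Coquelicot.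
Open Scope R_scope.
Definition dl (t : R) : R := / 2 * exp (- t) + / 2 * exp (- (2 * t)).
Definition G1 (k a : R) : R := - / 4 * a ^ 4 + k * a ^ 3 - k ^ 2 * a ^ 2 - 3 / 4 * a - 1.

Lemma G1_bound k a : G1 k a + 1 + 3/4 * a <= 0.
Proof.
  unfold G1. replace (- / 4 * a ^ 4 + k * a ^ 3 - k ^ 2 * a ^ 2 - 3 / 4 * a - 1 + 1 + 3 / 4 * a)
    with (- ((a*a/2 - k*a) ^ 2)) by field.
  pose proof (pow2_ge_0 (a*a/2 - k*a)). lra.
Qed.

Lemma G1_0 k : G1 k 0 = -1.
Proof. unfold G1. ring. Qed.

Lemma exp_pow_n n y : exp (- (INR n * y)) = exp (- y) ^ n.
Proof.
  induction n as [|n IH].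
  - simpl. rewrite Rmult_0_l, Ropp_0, exp_0. reflexivity.
  - rewrite S_INR. simpl. rewrite <- IH, <- exp_plus. f_equal. ring.
Qed.

Lemma is_series_eq (a : nat -> R) l l' : is_series a l -> l = l' -> is_series a l'.
Proof. intros H ->. exact H. Qed.

Definition Tsum (h : R) := / 2 * / (1 - exp (- h)) + / 2 * / (1 - exp (- (2 * h))).

Lemma exp_neg_lt1 y : 0 < y -> 0 < exp (- y) < 1.
Proof.
  intros Hy. split. apply exp_pos. rewrite <- exp_0. apply exp_increasing. lra.
Qed.

Lemma ser_delta h : 0 < h -> is_series (fun n => dl (INR n * h)) (Tsum h).
Proof.
  intros Hh.
  assert (H1 := exp_neg_lt1 h Hh). assert (H2 := exp_neg_lt1 (2*h) ltac:(lra)).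
  assert (A1 : Rabs (exp (-h)) < 1) by (rewrite Rabs_right; lra).
  assert (A2 : Rabs (exp (-(2*h))) < 1) by (rewrite Rabs_right; lra).
  pose proof (is_series_scal (/2) _ _ (is_series_geom _ A1)) as S1.
  pose proof (is_series_scal (/2) _ _ (is_series_geom _ A2)) as S2.
  pose proof (is_series_plus _ _ _ _ S1 S2) as S.
  eapply is_series_ext; [| exact S].
  intros n. simpl. unfold dl. rewrite exp_pow_n.
  replace (- (2 * (INR n * h))) with (- (INR n * (2 * h))) by ring.
  rewrite exp_pow_n. reflexivity.
Qed.

Lemma Tsum_bound h : 0 < h -> 0 <= Tsum h - 1 /\ h * (Tsum h - 1) <= 3/4.
Proof.
  intros Hh. unfold Tsum. rewrite !exp_Ropp.
  assert (E1 := exp_ineq1 h ltac:(lra)).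
  assert (E2 := exp_ineq1 (2*h) ltac:(lra)).
  set (e1 := exp h) in *. set (e2 := exp (2*h)) in *.
  replace (/ 2 * / (1 - / e1) + / 2 * / (1 - / e2) - 1)
    with (/2 * / (e1 - 1) + /2 * / (e2 - 1)) by (field; lra).
  assert (I1 : / (e1 - 1) <= / h) by (apply Rinv_le_contravar; lra).
  assert (I2 : / (e2 - 1) <= / (2*h)) by (apply Rinv_le_contravar; lra).
  assert (P1 : 0 < / (e1 - 1)) by (apply Rinv_0_lt_compat; lra).
  assert (P2 : 0 < / (e2 - 1)) by (apply Rinv_0_lt_compat; lra).
  split. lra.
  assert (h * / (e1 - 1) <= 1).
  { apply Rle_trans with (h * / h). apply Rmult_le_compat_l; lra. right; field; lra. }
  assert (h * / (e2 - 1) <= /2).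
  { apply Rle_trans with (h * / (2*h)). apply Rmult_le_compat_l; lra. right; field; lra. }
  lra.
Qed.

Lemma dprob1_const p0 n : dprob1 (fun _ => mkGen 0 0) p0 n = p0.
Proof. induction n; simpl; [reflexivity| rewrite IHn; ring]. Qed.

Lemma dprob1_concat u p0 m :
  dprob1 (pol_concat1 u (mkGen 0 0)) p0 (S m) = p0 * (1 - ga u) + (1 - p0) * gb u.
Proof.
  induction m. reflexivity.
  change (dprob1 (pol_concat1 u (mkGen 0 0)) p0 (S (S m))) with
    (let p := dprob1 (pol_concat1 u (mkGen 0 0)) p0 (S m) in p * (1 - 0) + (1 - p) * 0).
  cbv zeta. rewrite IHm. ring.
Qed.

Lemma Vh_value dt g1 g2 h i pol l :
  infinite_sum (dterm dt g1 g2 h pol i) l -> Vh dt g1 g2 h i pol = l.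
Proof.
  intros H. unfold Vh.
  pose proof (epsilon_spec (inhabits 0) (fun l => infinite_sum (dterm dt g1 g2 h pol i) l)
     (ex_intro _ l H)) as H'.
  eapply uniqueness_sum; eauto.
Qed.

Lemma dl0 : dl 0 = 1.
Proof. unfold dl. rewrite Ropp_0, Rmult_0_r, Ropp_0, exp_0. field. Qed.

Lemma disc_main k h i u : 0 < h -> stochastic u ->
  Vh dl (G1 k) (fun _ => 0) h i (fun _ => mkGen 0 0) >=
  Vh dl (G1 k) (fun _ => 0) h i (pol_concat1 u (mkGen 0 0)).
Proof.
  intros Hh Hu. unfold stochastic in Hu. destruct Hu as [[Ha0 Ha1] [Hb0 Hb1]].
  set (p0 := init1 i).
  set (T := Tsum h).
  set (p1 := p0 * (1 - ga u) + (1 - p0) * gb u).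
  assert (ST := ser_delta h Hh).
  assert (V1 : Vh dl (G1 k) (fun _ => 0) h i (fun _ => mkGen 0 0) = - (p0 * h) * T).
  { apply Vh_value. apply is_series_Reals.
    pose proof (is_series_scal (- (p0 * h)) _ _ ST) as S.
    eapply is_series_ext; [|exact S]. intros n. unfold dterm, kappa1, kappa2.
    rewrite dprob1_const. simpl. unfold Rdiv. rewrite Rmult_0_l. rewrite G1_0.
    fold p0. change (scal (- (p0 * h)) (dl (INR n * h))) with (- (p0 * h) * dl (INR n * h)).
    ring. }
  assert (V2 : Vh dl (G1 k) (fun _ => 0) h i (pol_concat1 u (mkGen 0 0)) =
     - (p1 * h) * T + p1 * h + p0 * G1 k (ga u / h) * h).
  { apply Vh_value. apply is_series_Reals.
    pose proof (is_series_scal (- (p1 * h)) _ _ ST) as Sr.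
    apply (is_series_eq _ _ (plus (- (p1 * h) * T + p1 * h) (- (p1 * h) * dl (INR 0 * h)))) in Sr.
    2:{ simpl INR. rewrite Rmult_0_l, dl0.
        change (- (p1 * h) * T = - (p1 * h) * T + p1 * h + - (p1 * h) * 1). ring. }
    pose proof (is_series_incr_1 (fun n : nat => - (p1*h) * dl (INR n * h)) _ Sr) as S2.
    clear Sr. rename S2 into Sr.
    apply is_series_decr_1.
    eapply is_series_eq.
    - eapply is_series_ext; [|exact Sr]. intros n. unfold dterm, kappa1, kappa2.
      rewrite dprob1_concat. fold p0. fold p1. simpl pol_concat1.
      unfold Rdiv. rewrite Rmult_0_l, G1_0. match goal with |- ?a = ?b => change (@eq R a b) end. ring.
    - unfold dterm, kappa1, kappa2. simpl dprob1. simpl pol_concat1. fold p0.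
      simpl INR. rewrite Rmult_0_l, dl0.
      match goal with |- ?a = ?b => change (@eq R a b) end.
      change (plus ?a ?b) with (a + b). change (opp ?a) with (- a). ring. }
  rewrite V1, V2.
  destruct (Tsum_bound h Hh) as [TB1 TB2]. fold T in TB1, TB2.
  assert (GB := G1_bound k (ga u / h)).
  assert (X0 : 0 <= ga u / h) by (apply Rdiv_le_0_compat; lra).
  destruct i; unfold p1, p0; simpl.
  - set (x := ga u / h) in *.
    assert (ga u = x * h) by (unfold x; field; lra).
    assert (x * (h * (T - 1)) <= x * (3/4)) by (apply Rmult_le_compat_l; lra).
    assert (h * (x * (h * (T - 1)) + 1 + G1 k x) <= 0).
    { rewrite Rmult_comm. apply Rmult_le_0_r; lra. }
    apply Rle_ge. apply Rminus_le.
    match goal with |- ?l <= 0 => replace l with (h * (x * (h * (T - 1)) + 1 + G1 k x)) by (rewrite H; ring) end.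
    lra.
  - assert (0 <= gb u * h * (T - 1)).
    { apply Rmult_le_pos; [apply Rmult_le_pos|]; lra. }
    apply Rle_ge. apply Rminus_le.
    match goal with |- ?l <= 0 => replace l with (- (gb u * h * (T - 1))) by ring end.
    lra.
Qed.
Ltac req := match goal with |- ?a = ?b => change (@eq R a b) end.

Definition Dd (t : R) : R := / 2 * exp (- t) + / 4 * exp (- (2 * t)).
Definition bet (a b : R) : R := if Req_dec_T (a + b) 0 then 0 else b / (a + b).
Definition pc (a b p0 t : R) : R := bet a b + (p0 - bet a b) * exp (- (a + b) * t).
Definition Aa (a b p0 t : R) : R :=
  - bet a b * Dd t - (p0 - bet a b) * (exp (- t) * exp (- (a + b) * t) / (2 * (1 + (a + b)))
     + exp (- (2 * t)) * exp (- (a + b) * t) / (2 * (2 + (a + b)))).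

Lemma prob1_eq Q p0 t : prob1 Q p0 t = pc (ga Q) (gb Q) p0 t.
Proof.
  unfold prob1, pc, bet. cbv zeta. destruct (Req_dec_T (ga Q + gb Q) 0) as [e|e].
  - rewrite e. rewrite Ropp_0, Rmult_0_l, exp_0. ring.
  - reflexivity.
Qed.

Lemma bet_props a b : 0 <= a -> 0 <= b -> 0 <= bet a b <= 1 /\ (a + b) * bet a b = b.
Proof.
  intros Ha Hb. unfold bet. destruct (Req_dec_T (a + b) 0) as [e|e].
  - split; [lra|]. lra.
  - assert (0 < a + b) by lra. split. split.
    + apply Rdiv_le_0_compat; lra.
    + apply Rle_trans with ((a+b)/(a+b)). unfold Rdiv. apply Rmult_le_compat_r.
      left; apply Rinv_0_lt_compat; lra. lra. right; field; lra.
    + field; lra.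
Qed.

Lemma pc_range a b p0 t : 0 <= a -> 0 <= b -> 0 <= p0 <= 1 -> 0 <= t ->
  0 <= pc a b p0 t <= 1 /\ p0 * exp (- (a + b) * t) <= pc a b p0 t.
Proof.
  intros Ha Hb Hp Ht. destruct (bet_props a b Ha Hb) as [[B0 B1] _].
  assert (E0 := exp_pos (- (a + b) * t)).
  assert (E1 : exp (- (a + b) * t) <= 1).
  { rewrite <- exp_0. destruct (Req_dec (t * (a+b)) 0) as [z|z].
    - right. f_equal. lra.
    - left. apply exp_increasing. assert (0 <= t * (a+b)) by (apply Rmult_le_pos; lra). lra. }
  unfold pc. set (E := exp (- (a + b) * t)) in *.
  split; [split|]; nra.
Qed.

Lemma is_derive_Dd t : is_derive Dd t (- dl t).
Proof. unfold Dd, dl. auto_derive; auto. req. field. Qed.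

Lemma is_derive_Aa a b p0 t : 0 <= a + b -> is_derive (Aa a b p0) t (dl t * pc a b p0 t).
Proof.
  intros Hs. unfold Aa, Dd, dl, pc. set (B := bet a b). set (s := a + b) in *.
  auto_derive; auto. req. field. split; lra.
Qed.

Lemma is_derive_pc a b p0 t :
  is_derive (pc a b p0) t (- (a + b) * (p0 - bet a b) * exp (- (a + b) * t)).
Proof. unfold pc. auto_derive; auto. req. field. Qed.

Lemma imp_unique f a l1 l2 : improper_int_is f a l1 -> improper_int_is f a l2 -> l1 = l2.
Proof.
  intros [I1 H1] [_ H2].
  destruct (Req_dec l1 l2) as [e|n]; [exact e|exfalso].
  set (e := Rabs (l1 - l2) / 2).
  assert (He : 0 < e) by (unfold e; assert (0 < Rabs (l1 - l2)) by (apply Rabs_pos_lt; lra); lra).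
  destruct (H1 e He) as [B1 HB1]. destruct (H2 e He) as [B2 HB2].
  set (b := Rmax a (Rmax B1 B2)).
  assert (Hab : a <= b) by apply Rmax_l.
  assert (HB1b : B1 <= b) by (unfold b; eapply Rle_trans; [apply Rmax_l|apply Rmax_r]).
  assert (HB2b : B2 <= b) by (unfold b; eapply Rle_trans; [apply Rmax_r|apply Rmax_r]).
  destruct (I1 b Hab) as [pr].
  specialize (HB1 b pr HB1b). specialize (HB2 b pr HB2b).
  assert (Rabs (l1 - l2) <= Rabs (RiemannInt pr - l1) + Rabs (RiemannInt pr - l2)).
  { replace (l1 - l2) with (- (RiemannInt pr - l1) + (RiemannInt pr - l2)) by ring.
    eapply Rle_trans; [apply Rabs_triang|]. rewrite Rabs_Ropp. lra. }
  unfold e in *. lra.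
Qed.

Lemma imp_value f l :
  (forall b, 0 <= b -> ex_RInt f 0 b) ->
  (forall e, 0 < e -> exists B, forall b, B <= b -> Rabs (RInt f 0 b - l) < e) ->
  improper_int f 0 = l.
Proof.
  intros Hex Hlim.
  assert (Hl : improper_int_is f 0 l).
  { split.
    - intros b Hb. constructor. apply ex_RInt_Reals_0. apply Hex. exact Hb.
    - intros e He. destruct (Hlim e He) as [B HB]. exists B. intros b pr Hb.
      rewrite <- RInt_Reals. apply HB. exact Hb. }
  unfold improper_int.
  pose proof (epsilon_spec (inhabits 0) (fun l => improper_int_is f 0 l) (ex_intro _ l Hl)) as H.
  eapply imp_unique; eauto.
Qed.

Lemma Dd_nonneg t : 0 <= Dd t.
Proof. unfold Dd. pose proof (exp_pos (-t)). pose proof (exp_pos (-(2*t))). lra. Qed.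

Lemma Dd_small M e : 0 < e -> exists B, forall b, B <= b -> Rabs (M * Dd b) < e.
Proof.
  intros He. exists (Rmax 0 (Rabs M / e)). intros b Hb.
  assert (Hb0 : 0 <= b) by (eapply Rle_trans; [apply Rmax_l|exact Hb]).
  assert (HbM : Rabs M / e <= b) by (eapply Rle_trans; [apply Rmax_r|exact Hb]).
  assert (E1 := exp_ineq1_le b).
  assert (X1 : exp (- b) <= / (1 + b)).
  { rewrite exp_Ropp. apply Rinv_le_contravar; lra. }
  assert (X2 : exp (- (2 * b)) <= exp (- b)).
  { destruct (Req_dec b 0) as [z|z]. right. f_equal. lra. left. apply exp_increasing. lra. }
  assert (D1 : Dd b <= / (1 + b)).
  { unfold Dd. pose proof (exp_pos (-(2*b))). lra. }
  rewrite Rabs_mult, (Rabs_right (Dd b)) by (apply Rle_ge, Dd_nonneg).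
  apply Rle_lt_trans with (Rabs M * / (1 + b)).
  { apply Rmult_le_compat_l. apply Rabs_pos. exact D1. }
  assert (Rabs M <= e * b).
  { apply Rle_trans with (e * (Rabs M / e)). right. field. lra. apply Rmult_le_compat_l; lra. }
  apply Rmult_lt_reg_r with (1 + b). lra.
  rewrite Rmult_assoc, Rinv_l by lra. lra.
Qed.

Lemma RInt_dl c a b : is_RInt (fun t => c * dl t) a b (c * (Dd a - Dd b)).
Proof.
  assert (H := is_RInt_derive (fun t => - c * Dd t) (fun t => c * dl t) a b).
  replace (c * (Dd a - Dd b)) with (minus (- c * Dd b) (- c * Dd a)).
  2:{ change (minus ?u ?v) with (u - v). req. ring. }
  apply H.
  - intros x _. unfold Dd, dl. auto_derive; auto. req. field.
  - intros x _. apply (ex_derive_continuous (fun t => c * dl t)). unfold dl. auto_derive; auto.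
Qed.

Lemma RInt_left G a b p0 x : 0 <= a + b ->
  is_RInt (fun t => G * (dl t * pc a b p0 t)) 0 x (G * (Aa a b p0 x - Aa a b p0 0)).
Proof.
  intros Hs.
  assert (H := is_RInt_derive (fun t => G * Aa a b p0 t) (fun t => G * (dl t * pc a b p0 t)) 0 x).
  replace (G * (Aa a b p0 x - Aa a b p0 0)) with (minus (G * Aa a b p0 x) (G * Aa a b p0 0)).
  2:{ change (minus ?u ?v) with (u - v). req. ring. }
  apply H.
  - intros y _. apply (is_derive_scal (Aa a b p0) y G). apply is_derive_Aa. exact Hs.
  - intros y _. apply (ex_derive_continuous (fun t => G * (dl t * pc a b p0 t))). unfold dl, pc. auto_derive; auto.
Qed.

Lemma prob1_Qs p0 t : prob1 (mkGen 0 0) p0 t = p0.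
Proof.
  unfold prob1. simpl. destruct (Req_dec_T (0 + 0) 0) as [e|e]. reflexivity.
  exfalso; apply e; ring.
Qed.

Lemma Fc_Qs k i : Fc dl (G1 k) (fun _ => 0) i (mkGen 0 0) = - init1 i * Dd 0.
Proof.
  unfold Fc. set (p0 := init1 i).
  assert (Eq : forall t, exp_payoff dl (G1 k) (fun _ => 0) (fun _ => mkGen 0 0)
            (fun t => prob1 (mkGen 0 0) p0 t) t = - p0 * dl t).
  { intros t. unfold exp_payoff. rewrite prob1_Qs. simpl. rewrite G1_0. ring. }
  assert (IS : forall b, is_RInt (exp_payoff dl (G1 k) (fun _ => 0) (fun _ => mkGen 0 0)
            (fun t => prob1 (mkGen 0 0) p0 t)) 0 b (- p0 * (Dd 0 - Dd b))).
  { intros b. eapply is_RInt_ext; [|apply RInt_dl]. intros x _. symmetry. apply Eq. }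
  apply imp_value.
  - intros b _. eexists. apply IS.
  - intros e He. destruct (Dd_small p0 e He) as [B HB]. exists B. intros b Hb.
    rewrite (is_RInt_unique _ _ _ _ (IS b)).
    replace (- p0 * (Dd 0 - Dd b) - - p0 * Dd 0) with (p0 * Dd b) by ring. apply HB; exact Hb.
Qed.

Lemma Fc_concat_val k i Q eps : 0 <= ga Q -> 0 <= gb Q -> 0 < eps ->
  Fc_concat dl (G1 k) (fun _ => 0) i Q eps (mkGen 0 0) =
  G1 k (ga Q) * (Aa (ga Q) (gb Q) (init1 i) eps - Aa (ga Q) (gb Q) (init1 i) 0)
  - pc (ga Q) (gb Q) (init1 i) eps * Dd eps.
Proof.
  intros Ha Hb He. unfold Fc_concat.
  set (p0 := init1 i). set (a := ga Q). set (b := gb Q).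
  set (f := exp_payoff dl (G1 k) (fun _ => 0) (gen_concat Q eps (mkGen 0 0))
              (prob1_concat Q eps (mkGen 0 0) p0)).
  set (G := G1 k a). set (P := pc a b p0 eps).
  assert (fl : forall t, t <= eps -> f t = G * (dl t * pc a b p0 t)).
  { intros t Ht. unfold f, exp_payoff, gen_concat, prob1_concat.
    destruct (Rle_dec t eps) as [_|n]; [|lra].
    rewrite prob1_eq. fold a b G. ring. }
  assert (fr : forall t, eps < t -> f t = - P * dl t).
  { intros t Ht. unfold f, exp_payoff, gen_concat, prob1_concat.
    destruct (Rle_dec t eps) as [n|_]; [lra|].
    rewrite prob1_Qs, prob1_eq. simpl. rewrite G1_0. fold a b P. ring. }
  assert (Hs : 0 <= a + b) by (unfold a, b; lra).
  assert (IL : forall x, 0 <= x <= eps -> is_RInt f 0 x (G * (Aa a b p0 x - Aa a b p0 0))).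
  { intros x Hx. eapply is_RInt_ext; [|apply RInt_left; exact Hs].
    intros y Hy. rewrite Rmax_right in Hy by lra. symmetry. apply fl. lra. }
  assert (IR : forall x, eps <= x -> is_RInt f eps x (- P * (Dd eps - Dd x))).
  { intros x Hx. eapply is_RInt_ext; [|apply RInt_dl].
    intros y Hy. rewrite Rmin_left in Hy by lra. symmetry. apply fr. lra. }
  assert (IB : forall x, eps <= x -> is_RInt f 0 x
     (G * (Aa a b p0 eps - Aa a b p0 0) + - P * (Dd eps - Dd x))).
  { intros x Hx. apply (is_RInt_Chasles f 0 eps x). apply IL; lra. apply IR; lra. }
  apply imp_value.
  - intros x Hx. destruct (Rle_dec x eps) as [l|n].
    + eexists. apply IL. lra.
    + eexists. apply IB. lra.
  - intros e Hep. destruct (Dd_small P e Hep) as [B HB]. exists (Rmax eps B). intros x Hx.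
    assert (eps <= x) by (eapply Rle_trans; [apply Rmax_l|exact Hx]).
    assert (B <= x) by (eapply Rle_trans; [apply Rmax_r|exact Hx]).
    rewrite (is_RInt_unique _ _ _ _ (IB x H)).
    match goal with |- Rabs ?z < _ => replace z with (P * Dd x) by ring end.
    apply HB; assumption.
Qed.

Definition Dif k a b p0 e := - p0 * Dd 0 - (G1 k a * (Aa a b p0 e - Aa a b p0 0) - pc a b p0 e * Dd e).
Definition Dif' k a b p0 e :=
  - (G1 k a * (dl e * pc a b p0 e)) +
  ((- (a + b) * (p0 - bet a b) * exp (- (a + b) * e)) * Dd e + pc a b p0 e * (- dl e)).

Lemma is_derive_Dif k a b p0 e : 0 <= a + b -> is_derive (Dif k a b p0) e (Dif' k a b p0 e).
Proof.
  intros Hs. unfold Dif, Dif', Aa, pc, Dd, dl.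
  set (B := bet a b). set (G := G1 k a). set (s := a + b) in *.
  auto_derive; auto. req. field. split; lra.
Qed.

Lemma Dif0 k a b p0 : Dif k a b p0 0 = 0.
Proof.
  unfold Dif, pc. rewrite Rmult_0_r, exp_0. ring.
Qed.

Lemma exp2_ge t : 0 <= t -> 1 - 2 * t <= exp (- (2 * t)) /\ exp (- t) <= 1 /\ exp (- (2 * t)) <= exp (- t).
Proof.
  intros Ht. split. pose proof (exp_ineq1_le (- (2 * t))). lra.
  split. rewrite <- exp_0. destruct (Req_dec t 0) as [z|z]. right. f_equal. lra. left. apply exp_increasing. lra.
  destruct (Req_dec t 0) as [z|z]. right. f_equal. lra. left. apply exp_increasing. lra.
Qed.

Lemma Dif'_form k a b p0 e : 0 <= a -> 0 <= b ->
  Dif' k a b p0 e = pc a b p0 e * (- (G1 k a + 1) * dl e - a * Dd e) + b * (1 - pc a b p0 e) * Dd e.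
Proof.
  intros Ha Hb. destruct (bet_props a b Ha Hb) as [_ HB].
  unfold Dif'.
  replace (- (a + b) * (p0 - bet a b) * exp (- (a + b) * e)) with (b - (a + b) * pc a b p0 e).
  2:{ unfold pc. set (B := bet a b) in *. set (s := a + b) in *. rewrite <- HB. ring. }
  ring.
Qed.

Lemma Dif'_lower k a b p0 e : 0 <= a -> 0 <= b -> 0 <= p0 <= 1 -> 0 <= e ->
  - (a * e / 4) <= Dif' k a b p0 e.
Proof.
  intros Ha Hb Hp He. rewrite Dif'_form by assumption.
  destruct (pc_range a b p0 e Ha Hb Hp He) as [[P0 P1] _].
  set (P := pc a b p0 e) in *.
  assert (GB := G1_bound k a).
  assert (D0 := Dd_nonneg e).
  destruct (exp2_ge e He) as [X1 [X2 X3]].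
  assert (dl0 : 0 <= dl e) by (unfold dl; pose proof (exp_pos (-e)); pose proof (exp_pos (-(2*e))); lra).
  assert (T1 : 0 <= b * (1 - P) * Dd e) by (apply Rmult_le_pos; [apply Rmult_le_pos|]; lra).
  assert (T2 : - (G1 k a + 1) * dl e - a * Dd e >= a * (3/4 * dl e - Dd e)).
  { assert ((- (G1 k a + 1) - 3/4 * a) * dl e >= 0) by (apply Rle_ge, Rmult_le_pos; lra). lra. }
  assert (T3 : 3/4 * dl e - Dd e = (exp (- (2 * e)) - exp (- e)) / 8) by (unfold dl, Dd; field).
  assert (T4 : a * (3/4 * dl e - Dd e) >= - (a * e / 4)).
  { rewrite T3. assert (a * ((1 - 2 * e - 1) / 8) <= a * ((exp (- (2 * e)) - exp (- e)) / 8)).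
    apply Rmult_le_compat_l; lra. lra. }
  assert (T5 : P * (- (G1 k a + 1) * dl e - a * Dd e) >= P * (- (a * e / 4))).
  { apply Rle_ge, Rmult_le_compat_l; lra. }
  assert (T6 : P * (- (a * e / 4)) >= - (a * e / 4)).
  { assert (0 <= a * e / 4) by (apply Rmult_le_pos; [apply Rmult_le_pos|]; lra).
    assert (P * (a * e / 4) <= 1 * (a * e / 4)) by (apply Rmult_le_compat_r; lra). lra. }
  lra.
Qed.

Lemma init1_range i : 0 <= init1 i <= 1.
Proof. destruct i; simpl; lra. Qed.

Lemma MVT_Dif k a b p0 eps : 0 <= a -> 0 <= b -> 0 < eps ->
  exists c, Dif k a b p0 eps = Dif' k a b p0 c * eps /\ 0 < c < eps.
Proof.
  intros Ha Hb He.
  destruct (MVT_cor2 (Dif k a b p0) (Dif' k a b p0) 0 eps He) as [c [Hc1 Hc2]].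
  { intros c _. apply is_derive_Reals. apply is_derive_Dif. lra. }
  exists c. split; [|exact Hc2]. rewrite Dif0 in Hc1. lra.
Qed.

Lemma weak k : weak_equilibrium dl (G1 k) (fun _ => 0) (mkGen 0 0).
Proof.
  split. unfold admissible_gen; simpl; lra.
  intros Q i [Ha Hb] eta Heta.
  set (a := ga Q) in *. set (b := gb Q) in *.
  exists (4 * eta / (a + 1)). split.
  { apply Rdiv_lt_0_compat; lra. }
  intros eps [E0 E1].
  rewrite Fc_Qs, Fc_concat_val by assumption. fold a b.
  match goal with |- _ <= ?n / _ => replace n with (Dif k a b (init1 i) eps) by (unfold Dif; ring) end.
  destruct (MVT_Dif k a b (init1 i) eps Ha Hb E0) as [c [Hc1 Hc2]].
  rewrite Hc1. replace (Dif' k a b (init1 i) c * eps / eps) with (Dif' k a b (init1 i) c) by (field; lra).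
  assert (L := Dif'_lower k a b (init1 i) c Ha Hb (init1_range i) ltac:(lra)).
  assert (a * c <= a * eps) by (apply Rmult_le_compat_l; lra).
  assert ((a + 1) * eps < (a + 1) * (4 * eta / (a + 1))) by (apply Rmult_lt_compat_l; lra).
  replace ((a + 1) * (4 * eta / (a + 1))) with (4 * eta) in H0 by (field; lra).
  lra.
Qed.

Lemma not_strong k : 0 < k -> ~ strong_equilibrium dl (G1 k) (fun _ => 0) (mkGen 0 0).
Proof.
  intros Hk [_ H].
  destruct (H (mkGen (2 * k) 0) S1) as [eps [He H1]].
  { unfold admissible_gen; simpl; lra. }
  specialize (H1 eps (conj He (Rle_refl _))).
  rewrite Fc_Qs, Fc_concat_val in H1 by (simpl; lra). simpl ga in H1; simpl gb in H1.
  assert (D : Dif k (2 * k) 0 (init1 S1) eps >= 0).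
  { unfold Dif. lra. }
  destruct (MVT_Dif k (2 * k) 0 (init1 S1) eps ltac:(lra) ltac:(lra) He) as [c [Hc1 Hc2]].
  rewrite Dif'_form in Hc1 by lra.
  destruct (pc_range (2 * k) 0 (init1 S1) c ltac:(lra) ltac:(lra) (init1_range S1) ltac:(lra)) as [_ P].
  simpl init1 in *.
  assert (E : 0 < exp (- (2 * k + 0) * c)) by apply exp_pos.
  assert (X : exp (- (2 * c)) < exp (- c)) by (apply exp_increasing; lra).
  assert (G : - (G1 k (2 * k) + 1) * dl c - 2 * k * Dd c = 2 * k * ((exp (- (2 * c)) - exp (- c)) / 8)).
  { unfold G1, dl, Dd. field. }
  rewrite G in Hc1.
  assert (N : 2 * k * ((exp (- (2 * c)) - exp (- c)) / 8) < 0).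
  { assert (0 < 2 * k * ((exp (- c) - exp (- (2 * c))) / 8)) by
      (apply Rmult_lt_0_compat; [lra|]; apply Rdiv_lt_0_compat; lra). lra. }
  set (N' := 2 * k * ((exp (- (2 * c)) - exp (- c)) / 8)) in *.
  set (Pc := pc (2 * k) 0 1 c) in *.
  assert (0 < Pc * (- N')) by (apply Rmult_lt_0_compat; lra).
  assert (0 < (Pc * (- N')) * eps) by (apply Rmult_lt_0_compat; lra).
  assert (Dif k (2 * k) 0 1 eps = - ((Pc * (- N')) * eps)) by (rewrite Hc1; ring).
  lra.
Qed.

Theorem mainTheorem14 (k : R) (hk : 0 < k) :
  let delta := fun t : R => / 2 * exp (- t) + / 2 * exp (- (2 * t)) in
  let g1 := fun a : R => - / 4 * a ^ 4 + k * a ^ 3 - k ^ 2 * a ^ 2 - 3 / 4 * a - 1 in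
  let g2 := fun _ : R => 0 in
  let Qs := mkGen 0 0 in
  let us := mkGen 0 0 in
  weak_equilibrium delta g1 g2 Qs /\
  ~ strong_equilibrium delta g1 g2 Qs /\
  (exists h0, 0 < h0 /\ forall h, 0 < h < h0 -> disc_equilibrium delta g1 g2 h us) /\
  (forall h, 0 < h -> mkGen ((ga us - 0) / h) ((gb us - 0) / h) = Qs).
Proof.
  intros delta g1 g2 Qs us.
  split; [exact (weak k)|].
  split; [exact (not_strong k hk)|].
  split.
  - exists 1. split; [lra|]. intros h [H0 _]. split.
    + unfold stochastic; simpl; lra.
    + intros u i Hu. exact (disc_main k h i u H0 Hu).
  - intros h Hh. unfold us, Qs; simpl. f_equal; field; lra.
Qed.
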